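(* The group $H$ does not contain any non-abelian free subgroup. Consequently, for every subring $A<\mathbb{R}$, the group $H(A)$ contains no non-abelian free subgroup.
   Context: Let $\mathbb{P}^1=\mathbb{P}^1(\mathbb{R})$ be the real projective line with its usual topology (a circle), with the natural action of $\mathrm{PSL}_2(\mathbb{R})$. Let $G$ be the group of all homeomorphisms of $\mathbb{P}^1$ which are piecewise in $\mathrm{PSL}_2(\mathbb{R})$ with finitely many pieces, each piece an interval of $\mathbb{P}^1$. Let $\infty\in\mathbb{P}^1$ be the point corresponding to the first basis vector of $\mathbb{R}^2$, and $H<G$ its stabilizer. For a subring $A<\mathbb{R}$, $P_A\subseteq\mathbb{P}^1$ is the set of fixed points of hyperbolic elements of $\mathrm{PSL}_2(A)$, $G(A)$ is the subgroup of $G$ of elements piecewise in $\mathrm{PSL}_2(A)$ with all interval endpoints in $P_A$, and $H(A)=G(A)\cap H$. *)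

(* Defs.v *)
From Stdlib Require Import Reals List.
Open Scope R_scope.

(** The real projective line P^1(R), in the affine chart [x:y] |-> x/y:
    [Some x] is the line spanned by (x,1), and [None] = infinity is the line
    spanned by the first basis vector (1,0). *)
Definition P1 := option R.
Definition infty : P1 := None.

(** Topology of P^1 (one-point compactification of R, i.e. a circle),
    given by basic neighbourhoods. *)
Definition nbhd (p : P1) (U : P1 -> Prop) : Prop :=
  match p with
  | Some x => exists e, 0 < e /\ forall y, Rabs (y - x) < e -> U (Some y)
  | None => exists M, U None /\ forall y, M < Rabs y -> U (Some y)
  end.

Definition continuous_P1 (f : P1 -> P1) : Prop :=
  forall p V, nbhd (f p) V -> nbhd p (fun q => V (f q)).

Definition homeo_P1 (f : P1 -> P1) : Prop :=
  exists g : P1 -> P1,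
    (forall p, g (f p) = p) /\ (forall p, f (g p) = p) /\
    continuous_P1 f /\ continuous_P1 g.

(** Cyclic order on the circle P^1 (infinity placed after +oo / before -oo). *)
Definition ltP1 (a b : P1) : Prop :=
  match a, b with
  | Some x, Some y => x < y
  | Some _, None => True
  | None, _ => False
  end.

Definition cyc (a x b : P1) : Prop :=
  (ltP1 a x /\ ltP1 x b) \/ (ltP1 x b /\ ltP1 b a) \/ (ltP1 b a /\ ltP1 a x).

(** Open arc from a to b (in the positive direction); for a = b it is P^1 \ {a}. *)
Definition open_arc (a b x : P1) : Prop :=
  x <> a /\ x <> b /\ (a = b \/ cyc a x b).

(** A piece: an interval of P^1 with endpoints a, b (each endpoint included
    or not according to a boolean flag), together with a matrix (a,b,c,d). *)
Record piece := Piece {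
  pa : P1; pb : P1; ca : bool; cb : bool; pm : R * R * R * R }.

Definition in_arc (p : piece) (x : P1) : Prop :=
  open_arc (pa p) (pb p) x \/ (ca p = true /\ x = pa p) \/ (cb p = true /\ x = pb p).

Definition mob (m : R * R * R * R) (p : P1) : P1 :=
  let '(a, b, c, d) := m in
  match p with
  | Some x => if Req_EM_T (c * x + d) 0 then None else Some ((a * x + b) / (c * x + d))
  | None => if Req_EM_T c 0 then None else Some (a / c)
  end.

(** Matrices of SL_2(A) (their images in PSL_2(A) act through [mob]). *)
Definition in_SL2 (A : R -> Prop) (m : R * R * R * R) : Prop :=
  let '(a, b, c, d) := m in A a /\ A b /\ A c /\ A d /\ a * d - b * c = 1.

Definition hyperbolic (m : R * R * R * R) : Prop :=
  let '(a, b, c, d) := m in Rabs (a + d) > 2.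

Definition P_ (A : R -> Prop) (x : P1) : Prop :=
  exists m, in_SL2 A m /\ hyperbolic m /\ mob m x = x.

Definition piecewise (A : R -> Prop) (E : P1 -> Prop) (f : P1 -> P1) : Prop :=
  exists ps : list piece,
    (forall p, In p ps ->
        in_SL2 A (pm p) /\ E (pa p) /\ E (pb p) /\
        forall x, in_arc p x -> f x = mob (pm p) x) /\
    (forall x, exists p, In p ps /\ in_arc p x).

Definition allR : R -> Prop := fun _ => True.
Definition allP1 : P1 -> Prop := fun _ => True.

Definition in_G (f : P1 -> P1) : Prop := homeo_P1 f /\ piecewise allR allP1 f.
Definition in_H (f : P1 -> P1) : Prop := in_G f /\ f infty = infty.

Definition in_GA (A : R -> Prop) (f : P1 -> P1) : Prop :=
  homeo_P1 f /\ piecewise A (P_ A) f.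
Definition in_HA (A : R -> Prop) (f : P1 -> P1) : Prop :=
  in_GA A f /\ f infty = infty.

Definition subring (A : R -> Prop) : Prop :=
  A 0 /\ A 1 /\ (forall x y, A x -> A y -> A (x + y)) /\
  (forall x, A x -> A (- x)) /\ (forall x y, A x -> A y -> A (x * y)).

(** Free subgroups. A word is a list of letters (i, true) = x_i, (i, false) = x_i^-1. *)
Fixpoint reduced {I : Type} (w : list (I * bool)) : Prop :=
  match w with
  | l1 :: ((l2 :: _) as t) => ~ (fst l1 = fst l2 /\ snd l1 <> snd l2) /\ reduced t
  | _ => True
  end.

Fixpoint eval_word {I : Type} (x y : I -> P1 -> P1) (w : list (I * bool)) (p : P1) : P1 :=
  match w with
  | nil => p
  | (i, b) :: t => (if b then x i else y i) (eval_word x y t p)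
  end.

(** The group [S] (a subgroup of the homeomorphism group, under composition)
    contains a non-abelian free subgroup: some family (x_i) of elements of S,
    with at least two indices, is a free basis of the subgroup it generates
    (y_i is the inverse of x_i). *)
Definition has_nonabelian_free_subgroup (S : (P1 -> P1) -> Prop) : Prop :=
  exists (I : Type) (x y : I -> P1 -> P1),
    (forall i, S (x i)) /\
    (forall i p, y i (x i p) = p /\ x i (y i p) = p) /\
    (exists i j : I, i <> j) /\
    (forall w, w <> nil -> reduced w -> exists p, eval_word x y w p <> p).

(* Main.v *)
Require Import Defs.
From Stdlib Require Import Reals List Lra Lia Classical.
Import ListNotations.
Open Scope R_scope.

Definition cancel {J : Type} (l1 l2 : J * bool) : Prop := fst l1 = fst l2 /\ snd l1 <> snd l2.
Definition linv {J : Type} (l : J * bool) : J * bool := (fst l, negb (snd l)).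
Definition winv {J : Type} (w : list (J * bool)) := rev (map linv w).
Fixpoint lastl {A : Type} (l : list A) : option A :=
  match l with nil => None | x :: nil => Some x | _ :: t => lastl t end.

Lemma linv_linv {J : Type} (l : J * bool) : linv (linv l) = l.
Proof. destruct l as [k b]; unfold linv; simpl; rewrite Bool.negb_involutive; reflexivity. Qed.

Lemma cancel_linv {J : Type} (a b : J * bool) : cancel a b -> b = linv a.
Proof. destruct a as [k x], b as [k' y]; unfold cancel, linv; simpl; intros [-> H].
  destruct x, y; simpl; congruence. Qed.

Lemma nocancel {J : Type} (a b : J * bool) : b <> linv a -> ~ cancel a b.
Proof. intros H C. apply H, cancel_linv, C. Qed.

Lemma linv_neq {J : Type} (a b : J * bool) : a <> linv b -> b <> linv a.
Proof. intros H E. apply H. rewrite E, linv_linv. reflexivity. Qed.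

Lemma linv_inj {J : Type} (a b : J * bool) : linv a = linv b -> a = b.
Proof. intro H. rewrite <- (linv_linv a), <- (linv_linv b), H. reflexivity. Qed.

Lemma lastl_cons {A : Type} (x : A) l : l <> nil -> lastl (x :: l) = lastl l.
Proof. destruct l; [congruence|reflexivity]. Qed.

Lemma lastl_app {A : Type} (a b : list A) x : lastl b = Some x -> lastl (a ++ b) = Some x.
Proof. induction a as [|y a IH]; intro H; [exact H|]. simpl.
  assert (a ++ b <> nil) as N. { destruct a, b; simpl in *; discriminate. }
  specialize (IH H). destruct (a ++ b); [congruence|exact IH]. Qed.

Lemma hd_app {A : Type} (a b : list A) x : hd_error a = Some x -> hd_error (a ++ b) = Some x.
Proof. destruct a; simpl; [discriminate|auto]. Qed.

Lemma reduced_app {J : Type} (a b : list (J * bool)) :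
  reduced a -> reduced b ->
  (forall x y, lastl a = Some x -> hd_error b = Some y -> ~ cancel x y) -> reduced (a ++ b).
Proof.
  induction a as [|x a IH]; intros Ha Hb Hj; [exact Hb|].
  destruct a as [|y a'].
  - simpl. destruct b as [|z b']; [exact Logic.I|]. split; [apply (Hj x z); reflexivity | exact Hb].
  - simpl in Ha. destruct Ha as [H1 H2]. change ((x :: y :: a') ++ b) with (x :: ((y :: a') ++ b)).
    simpl. split; [exact H1|]. apply (IH H2 Hb). intros u v Hu Hv. apply Hj; auto.
Qed.

Definition NR {J : Type} (w : list (J * bool)) (s t : J * bool) :=
  reduced w /\ hd_error w = Some s /\ lastl w = Some t.

Lemma NR_app {J : Type} (a b : list (J * bool)) s t s' t' :
  NR a s t -> NR b s' t' -> ~ cancel t s' -> NR (a ++ b) s t'.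
Proof.
  intros [Ra [Ha La]] [Rb [Hb Lb]] C. split; [|split].
  - apply reduced_app; auto. intros x y Hx Hy. congruence.
  - apply hd_app, Ha.
  - apply lastl_app, Lb.
Qed.

Lemma NR_single {J : Type} (l : J * bool) : NR [l] l l.
Proof. repeat split. Qed.

Lemma NR_nonnil {J : Type} (w : list (J * bool)) s t : NR w s t -> w <> nil.
Proof. intros [_ [H _]] E. subst. discriminate. Qed.

Lemma nocancel_linv {J : Type} (x y : J * bool) : ~ cancel x y -> ~ cancel (linv y) (linv x).
Proof. destruct x as [k a], y as [k' b]; unfold cancel, linv; simpl. intros H [E N]. apply H. split; auto.
  intro. subst. auto. Qed.

Lemma NR_inv {J : Type} (w : list (J * bool)) s t : NR w s t -> NR (winv w) (linv t) (linv s).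
Proof.
  revert s t. induction w as [|x w IH]; intros s t H.
  - destruct H as [_ [H _]]; discriminate.
  - destruct w as [|y w].
    + destruct H as [_ [H1 H2]]. simpl in H1, H2. inversion H1; inversion H2; subst. apply NR_single.
    + destruct H as [[R1 R2] [H1 H2]]. simpl in H1. inversion H1; subst.
      assert (NR (y :: w) y t) as Hy. { split; [exact R2|split; [reflexivity|]]. rewrite <- H2. reflexivity. }
      specialize (IH _ _ Hy).
      unfold winv. simpl map. simpl rev. change (NR (winv (y :: w) ++ [linv s]) (linv t) (linv s)).
      apply NR_app with (linv y) (linv s); [exact IH|apply NR_single|].
      apply nocancel_linv. exact R1.
Qed.

Definition Germ (phi kap : R -> R) (s lam mu : R) :=
  exists T, forall t, T < s * t -> phi (kap t) = kap (lam * t + mu).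

Lemma Germ_ext phi psi kap s l m : (forall x, phi x = psi x) -> Germ phi kap s l m -> Germ psi kap s l m.
Proof. intros E [T H]. exists T. intros t Ht. rewrite <- E. auto. Qed.

Lemma Germ_eq phi kap s l m l' m' : l = l' -> m = m' -> Germ phi kap s l m -> Germ phi kap s l' m'.
Proof. intros -> ->. auto. Qed.

Lemma Germ_comp phi psi kap s l1 m1 l2 m2 : (s = 1 \/ s = -1) -> 0 < l2 ->
  Germ phi kap s l1 m1 -> Germ psi kap s l2 m2 ->
  Germ (fun x => phi (psi x)) kap s (l1 * l2) (l1 * m2 + m1).
Proof.
  intros Hs Hl [T1 H1] [T2 H2].
  exists (Rmax T2 ((T1 + Rabs m2) / l2)). intros t Ht.
  rewrite H2 by (eapply Rle_lt_trans; [apply Rmax_l|exact Ht]).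
  rewrite H1.
  - f_equal. ring.
  - assert (A : (T1 + Rabs m2) / l2 < s * t) by (eapply Rle_lt_trans; [apply Rmax_r|exact Ht]).
    assert (B : T1 + Rabs m2 < l2 * (s * t)).
    { replace (T1 + Rabs m2) with (l2 * ((T1 + Rabs m2) / l2)) by (field; lra).
      apply Rmult_lt_compat_l; auto. }
    assert (C : - Rabs m2 <= s * m2).
    { destruct Hs as [-> | ->].
      - pose proof (Rle_abs (- m2)). rewrite Rabs_Ropp in H. lra.
      - pose proof (Rle_abs m2). lra. }
    replace (s * (l2 * t + m2)) with (l2 * (s * t) + s * m2) by ring. lra.
Qed.

Lemma Germ_inv phi phi' kap s l m : (s = 1 \/ s = -1) -> 0 < l ->
  (forall x, phi' (phi x) = x) -> Germ phi kap s l m -> Germ phi' kap s (/ l) (- m / l).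
Proof.
  intros Hs Hl Hinv [T H].
  exists (l * Rabs T + Rabs m). intros t Ht.
  set (u := / l * t + - m / l).
  assert (Hu : T < s * u).
  { assert (C : s * m <= Rabs m).
    { destruct Hs as [-> | ->].
      - pose proof (Rle_abs m). lra.
      - pose proof (Rle_abs (- m)). rewrite Rabs_Ropp in H0. lra. }
    assert (D : l * T <= l * Rabs T) by (apply Rmult_le_compat_l; [lra|apply Rle_abs]).
    assert (E : l * T < l * (s * u)).
    { unfold u. replace (l * (s * (/ l * t + - m / l))) with (s * t - s * m) by (field; lra). lra. }
    apply Rmult_lt_reg_l in E; auto. }
  specialize (H u Hu).
  replace (l * u + m) with t in H by (unfold u; field; lra).
  rewrite <- H, Hinv. reflexivity.
Qed.

Lemma Germ_id_fix phi p : phi p = p ->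
  Germ phi (fun t => p + / t) 1 1 0 -> Germ phi (fun t => p + / t) (-1) 1 0 ->
  exists e, 0 < e /\ forall x, Rabs (x - p) < e -> phi x = x.
Proof.
  intros H0 [T1 H1] [T2 H2].
  set (T := Rmax (Rmax T1 T2) 0 + 1).
  assert (TT1 : T1 < T) by (unfold T; pose proof (Rmax_l (Rmax T1 T2) 0); pose proof (Rmax_l T1 T2); lra).
  assert (TT2 : T2 < T) by (unfold T; pose proof (Rmax_l (Rmax T1 T2) 0); pose proof (Rmax_r T1 T2); lra).
  assert (T0 : 0 < T) by (unfold T; pose proof (Rmax_r (Rmax T1 T2) 0); lra).
  exists (/ T). split; [apply Rinv_0_lt_compat; lra|].
  intros x Hx. apply Rabs_def2 in Hx. destruct Hx as [Hx1 Hx2].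
  destruct (Rtotal_order x p) as [Hlt|[Heq|Hgt]].
  - set (t := / (x - p)).
    assert (Ht : T < - t).
    { unfold t. replace (- / (x - p)) with (/ (p - x)) by (field; lra).
      replace T with (/ / T) by (field; lra). apply Rinv_lt_contravar.
      + apply Rmult_lt_0_compat; [lra|apply Rinv_0_lt_compat; lra].
      + lra. }
    specialize (H2 t ltac:(lra)). unfold t in H2.
    replace (p + / / (x - p)) with x in H2 by (field; lra).
    rewrite H2. field; lra.
  - subst. exact H0.
  - set (t := / (x - p)).
    assert (Ht : T < t).
    { unfold t. replace T with (/ / T) by (field; lra). apply Rinv_lt_contravar.
      + apply Rmult_lt_0_compat; [lra|apply Rinv_0_lt_compat; lra].
      + lra. }
    specialize (H1 t ltac:(lra)). unfold t in H1.
    replace (p + / / (x - p)) with x in H1 by (field; lra).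
    rewrite H1. field; lra.
Qed.

Lemma Germ_id_inf phi :
  Germ phi (fun t => t) 1 1 0 -> Germ phi (fun t => t) (-1) 1 0 ->
  exists M, forall x, M < Rabs x -> phi x = x.
Proof.
  intros [T1 H1] [T2 H2]. exists (Rmax T1 T2). intros x Hx.
  pose proof (Rmax_l T1 T2). pose proof (Rmax_r T1 T2).
  destruct (Rle_or_lt 0 x).
  - rewrite Rabs_pos_eq in Hx by lra. rewrite H1 by lra. ring.
  - rewrite Rabs_left in Hx by lra. rewrite H2 by lra. ring.
Qed.

Lemma comm_id (Dom : R -> Prop) (phi phi' psi psi' : R -> R) (SA SB : R -> Prop) :
  (forall x, phi' (phi x) = x) -> (forall x, phi (phi' x) = x) ->
  (forall x, psi' (psi x) = x) -> (forall x, psi (psi' x) = x) ->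
  (forall x, Dom x -> Dom (phi x) /\ Dom (phi' x) /\ Dom (psi x) /\ Dom (psi' x)) ->
  (forall x, Dom x -> ~ SA x -> phi x = x) -> (forall x, Dom x -> ~ SB x -> psi x = x) ->
  (forall x, SA x -> SB x -> False) ->
  forall x, Dom x -> phi (psi (phi' (psi' x))) = x.
Proof.
  intros P1 P2 S1 S2 HD HA HB HAB.
  assert (Comm : forall z, Dom z -> phi (psi z) = psi (phi z)).
  { intros z Hz. destruct (HD z Hz) as [D1 [_ [D3 _]]]. destruct (classic (SB z)) as [Bz|Bz].
    - assert (Az : phi z = z) by (apply HA; auto; intro; eapply HAB; eauto).
      rewrite Az. destruct (classic (SB (psi z))) as [Bz'|Bz'].
      + apply HA; auto. intro; eapply HAB; eauto.
      + assert (psi (psi z) = psi z) by (apply HB; auto).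
        assert (psi z = z) by (rewrite <- (S1 (psi z)), H, S1; reflexivity).
        rewrite H0, Az. auto.
    - assert (Bz2 : psi z = z) by (apply HB; auto). rewrite Bz2.
      destruct (classic (SA (phi z))) as [Az'|Az'].
      + symmetry. apply HB; auto. intro; eapply HAB; eauto.
      + assert (phi (phi z) = phi z) by (apply HA; auto).
        assert (phi z = z) by (rewrite <- (P1 (phi z)), H, P1; reflexivity).
        rewrite H0. auto. }
  intros x Hx. destruct (HD x Hx) as [_ [_ [_ D4]]]. destruct (HD _ D4) as [_ [D2 _]].
  rewrite Comm by auto. rewrite P2, S2. reflexivity.
Qed.

Section PartB.
Variables (J : Type) (i j : J) (fx fy : J -> R -> R) (E : list R).
Hypothesis hij : i <> j.
Definition LOK (l : J * bool) := fst l = i \/ fst l = j.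
Hypothesis Hxy : forall k t, k = i \/ k = j -> fx k (fy k t) = t.
Hypothesis Hyx : forall k t, k = i \/ k = j -> fy k (fx k t) = t.
Hypothesis Hinc : forall k a b, k = i \/ k = j -> a < b -> fx k a < fx k b.

Definition L (l : J * bool) := if snd l then fx (fst l) else fy (fst l).
Definition W (w : list (J * bool)) (t : R) := fold_right (fun l acc => L l acc) t w.

Hypothesis Hfree : forall w, w <> nil -> reduced w -> Forall LOK w -> exists t, W w t <> t.

Definition Fix p := fx i p = p /\ fx j p = p.

Hypothesis Hginf : forall k s, k = i \/ k = j -> (s = 1 \/ s = -1) ->
  exists lam mu, 0 < lam /\ Germ (fx k) (fun t => t) s lam mu.
Hypothesis Hgfix : forall k s p, k = i \/ k = j -> (s = 1 \/ s = -1) -> fx k p = p ->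
  exists lam mu, 0 < lam /\ Germ (fx k) (fun t => p + / t) s lam mu /\
    (s = 1 -> (lam = 1 /\ mu = 0) \/ In p E).

Lemma fy_inc k a b : k = i \/ k = j -> a < b -> fy k a < fy k b.
Proof. intros Hk H. destruct (Rlt_or_le (fy k a) (fy k b)) as [|H2]; auto.
  exfalso. destruct H2 as [H2|H2].
  - apply (Hinc k) in H2; auto. rewrite !Hxy in H2; auto. lra.
  - apply (f_equal (fx k)) in H2. rewrite !Hxy in H2; auto. lra. Qed.

Lemma L_inc (l : J * bool) a b : LOK l -> a < b -> L l a < L l b.
Proof. destruct l as [k [|]]; unfold L, LOK; simpl; intros; [apply Hinc|apply fy_inc]; auto. Qed.

Lemma L_le (l : J * bool) a b : LOK l -> a <= b -> L l a <= L l b.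
Proof. intros H [H1|H1]; [left; apply L_inc; auto|right; subst; auto]. Qed.

Lemma L_inv1 (l : J * bool) t : LOK l -> L (linv l) (L l t) = t.
Proof. destruct l as [k [|]]; unfold L, LOK, linv; simpl; intros; [apply Hyx|apply Hxy]; auto. Qed.

Lemma L_inv2 (l : J * bool) t : LOK l -> L l (L (linv l) t) = t.
Proof. destruct l as [k [|]]; unfold L, LOK, linv; simpl; intros; [apply Hxy|apply Hyx]; auto. Qed.

Lemma LOK_linv (l : J * bool) : LOK l -> LOK (linv l).
Proof. destruct l; unfold LOK, linv; simpl; auto. Qed.

Lemma W_app a b t : W (a ++ b) t = W a (W b t).
Proof. unfold W. apply fold_right_app. Qed.

Lemma W_cons (l : J * bool) w t : W (l :: w) t = L l (W w t).
Proof. reflexivity. Qed.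

Lemma Forall_winv w : Forall LOK w -> Forall LOK (winv w).
Proof. intro H. unfold winv. apply Forall_rev. apply Forall_map.
  eapply Forall_impl; [|exact H]. intros; apply LOK_linv; auto. Qed.

Lemma winv_cons (l : J * bool) w : winv (l :: w) = winv w ++ [linv l].
Proof. reflexivity. Qed.

Lemma W_inv w t : Forall LOK w -> W (winv w) (W w t) = t /\ W w (W (winv w) t) = t.
Proof.
  revert t. induction w as [|l w IH]; intros t H; [split; reflexivity|].
  inversion H; subst. rewrite winv_cons, !W_app. simpl. split.
  - rewrite L_inv1 by auto. apply IH; auto.
  - rewrite (proj2 (IH _ H3)). apply L_inv2; auto.
Qed.

Lemma W_inc w a b : Forall LOK w -> a < b -> W w a < W w b.
Proof. induction w as [|l w IH]; intros H Hab; simpl; auto. inversion H; subst.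
  apply L_inc; auto. Qed.

Lemma W_le w a b : Forall LOK w -> a <= b -> W w a <= W w b.
Proof. intros H [H1|H1]; [left; apply W_inc; auto|right; subst; auto]. Qed.

Lemma L_fix (l : J * bool) p : LOK l -> Fix p -> L l p = p.
Proof. destruct l as [k [|]]; unfold L, LOK, Fix; simpl; intros [->| ->] [H1 H2]; auto.
  - rewrite <- H1 at 1. apply Hyx; auto.
  - rewrite <- H2 at 1. apply Hyx; auto. Qed.

Lemma W_fix w p : Forall LOK w -> Fix p -> W w p = p.
Proof. induction w as [|l w IH]; intros H Hp; simpl; auto. inversion H; subst.
  rewrite IH; auto. apply L_fix; auto. Qed.

Lemma W_dom (Dom : R -> Prop) w x :
  (forall k x, k = i \/ k = j -> Dom x -> Dom (fx k x) /\ Dom (fy k x)) ->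
  Forall LOK w -> Dom x -> Dom (W w x).
Proof. intros HD. induction w as [|l w IH]; intros H Hx; simpl; auto. inversion H; subst.
  destruct l as [k [|]]; unfold L; simpl; apply HD; auto. Qed.

Definition Good (phi : R -> R) :=
  (forall p, Fix p -> exists e, 0 < e /\ forall x, Rabs (x - p) < e -> phi x = x) /\
  (exists M, forall x, M < Rabs x -> phi x = x).

Lemma Good_ext phi psi : (forall x, phi x = psi x) -> Good phi -> Good psi.
Proof. intros Ee [H1 [M H2]]. split.
  - intros p Hp. destruct (H1 p Hp) as [e [He H]]. exists e. split; auto. intros. rewrite <- Ee. auto.
  - exists M. intros. rewrite <- Ee. auto. Qed.

Lemma Good_comp phi psi : Good phi -> Good psi -> Good (fun x => phi (psi x)).
Proof. intros [A1 [M1 B1]] [A2 [M2 B2]]. split.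
  - intros p Hp. destruct (A1 p Hp) as [e1 [He1 H1]], (A2 p Hp) as [e2 [He2 H2]].
    exists (Rmin e1 e2). split; [apply Rmin_glb_lt; auto|]. intros x Hx.
    rewrite H2 by (eapply Rlt_le_trans; [exact Hx|apply Rmin_r]).
    apply H1. eapply Rlt_le_trans; [exact Hx|apply Rmin_l].
  - exists (Rmax M1 M2). intros x Hx. rewrite B2 by (eapply Rle_lt_trans; [apply Rmax_r|exact Hx]).
    apply B1. eapply Rle_lt_trans; [apply Rmax_l|exact Hx].
Qed.

Lemma Good_inv r : Forall LOK r -> Good (W r) -> Good (W (winv r)).
Proof. intros Hr [A [M B]]. split.
  - intros p Hp. destruct (A p Hp) as [e [He H]]. exists e. split; auto. intros x Hx.
    rewrite <- (H x Hx) at 1. apply W_inv; auto.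
  - exists M. intros x Hx. rewrite <- (B x Hx) at 1. apply W_inv; auto.
Qed.

Lemma Good_conj q phi : Forall LOK q -> Good phi -> Good (fun x => W q (phi (W (winv q) x))).
Proof.
  intros Hq [A [M B]].
  assert (Hq' : Forall LOK (winv q)) by (apply Forall_winv; auto).
  split.
  - intros p Hp. destruct (A p Hp) as [e [He H]].
    set (lo := W q (p - e / 2)). set (hi := W q (p + e / 2)).
    assert (Hlo : lo < p). { unfold lo. rewrite <- (W_fix q p Hq Hp) at 2. apply W_inc; auto; lra. }
    assert (Hhi : p < hi). { unfold hi. rewrite <- (W_fix q p Hq Hp) at 1. apply W_inc; auto; lra. }
    exists (Rmin (p - lo) (hi - p)). split; [apply Rmin_glb_lt; lra|].
    intros x Hx. apply Rabs_def2 in Hx. destruct Hx as [Hx1 Hx2].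
    pose proof (Rmin_l (p - lo) (hi - p)). pose proof (Rmin_r (p - lo) (hi - p)).
    assert (Z1 : W (winv q) x < p + e / 2).
    { rewrite <- (proj1 (W_inv q (p + e / 2) Hq)). apply W_inc; auto. fold hi. lra. }
    assert (Z2 : p - e / 2 < W (winv q) x).
    { rewrite <- (proj1 (W_inv q (p - e / 2) Hq)). apply W_inc; auto. fold lo. lra. }
    rewrite H. { apply W_inv; auto. }
    apply Rabs_def1; lra.
  - set (M' := Rmax (Rabs (W q M)) (Rabs (W q (- M)))). exists M'. intros x Hx.
    pose proof (Rmax_l (Rabs (W q M)) (Rabs (W q (- M)))).
    pose proof (Rmax_r (Rabs (W q M)) (Rabs (W q (- M)))).
    pose proof (Rle_abs (W q M)). pose proof (Rle_abs (- W q (- M))). rewrite Rabs_Ropp in H2.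
    rewrite B. { apply W_inv; auto. }
    destruct (Rle_or_lt 0 x).
    + unfold M' in *. rewrite (Rabs_pos_eq x) in Hx by lra.
      assert (M < W (winv q) x).
      { rewrite <- (proj1 (W_inv q M Hq)). apply W_inc; auto. unfold M' in *. lra. }
      pose proof (Rle_abs (W (winv q) x)). lra.
    + unfold M' in *. rewrite (Rabs_left x) in Hx by lra.
      assert (W (winv q) x < - M).
      { rewrite <- (proj1 (W_inv q (- M) Hq)). apply W_inc; auto. unfold M' in *. lra. }
      pose proof (Rle_abs (- W (winv q) x)). rewrite Rabs_Ropp in H5. lra.
Qed.


Lemma push x y : (forall p, x <= p -> p <= y -> ~ Fix p) -> exists h, Forall LOK h /\ W h y < x.
Proof.
  intros HF. destruct (Rlt_or_le y x) as [Hyx'|Hxy'].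
  { exists nil. split; auto. }
  apply NNPP. intro Hn.
  assert (Hlb : forall h, Forall LOK h -> x <= W h y).
  { intros h Hh. apply Rnot_lt_le. intro C. apply Hn. exists h. auto. }
  set (O := fun z => exists h, Forall LOK h /\ W h y = z).
  destruct (completeness (fun z => O (- z))) as [m [Hm1 Hm2]].
  { exists (- x). intros z [h [Hh Hz]]. specialize (Hlb h Hh). lra. }
  { exists (- y). exists nil. simpl. split; auto; ring. }
  set (mm := - m).
  assert (Lo : forall z, O z -> mm <= z).
  { intros z Hz. unfold mm. assert (- z <= m) by (apply Hm1; red; rewrite Ropp_involutive; auto). lra. }
  assert (Gr : forall b, (forall z, O z -> b <= z) -> b <= mm).
  { intros b Hb. unfold mm. assert (m <= - b).
    { apply Hm2. intros z Hz. specialize (Hb _ Hz). lra. } lra. }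
  assert (Hx : x <= mm).
  { apply Gr. intros z [h [Hh Hz]]. subst. auto. }
  assert (Hy : mm <= y).
  { apply Lo. exists nil. split; auto. }
  apply (HF mm); auto.
  assert (Fk : forall k, k = i \/ k = j -> fx k mm = mm).
  { intros k Hk.
    assert (A1 : fx k mm <= mm).
    { apply Gr. intros z [h [Hh Hz]].
      assert (O (fy k z)) as Oz.
      { exists ((k, false) :: h). split; [constructor; auto|]. simpl. unfold L; simpl. congruence. }
      apply Lo in Oz. rewrite <- (Hxy k z Hk). destruct Oz as [Oz|Oz]; [left; apply Hinc; auto|rewrite Oz; right; auto]. }
    assert (A2 : fy k mm <= mm).
    { apply Gr. intros z [h [Hh Hz]].
      assert (O (fx k z)) as Oz.
      { exists ((k, true) :: h). split; [constructor; auto|]. simpl. unfold L; simpl. congruence. }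
      apply Lo in Oz. rewrite <- (Hyx k z Hk). destruct Oz as [Oz|Oz]; [left; apply fy_inc; auto|rewrite Oz; right; auto]. }
    assert (mm <= fx k mm).
    { rewrite <- (Hxy k mm Hk) at 1. destruct A2 as [A2|A2]; [left; apply Hinc; auto|rewrite A2; right; auto]. }
    lra. }
  split; apply Fk; auto.
Qed.

Lemma not_reduced_split (w : list (J * bool)) : ~ reduced w ->
  exists a b l1 l2, w = a ++ l1 :: l2 :: b /\ cancel l1 l2.
Proof.
  induction w as [|x w IH]; intro H; [simpl in H; tauto|].
  destruct w as [|y w]; [simpl in H; tauto|].
  simpl in H. destruct (classic (cancel x y)) as [C|C].
  - exists nil, w, x, y. split; auto.
  - assert (~ reduced (y :: w)) as H2 by (intro; apply H; split; auto).
    destruct (IH H2) as [a [b [l1 [l2 [E1 E2]]]]]. exists (x :: a), b, l1, l2. rewrite E1. split; auto.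
Qed.

Lemma reduce_word n : forall w, (length w <= n)%nat -> Forall LOK w ->
  exists w', Forall LOK w' /\ reduced w' /\ forall t, W w' t = W w t.
Proof.
  induction n as [|n IH]; intros w Hl Hw.
  - destruct w; [|simpl in Hl; lia]. exists nil. simpl. auto.
  - destruct (classic (reduced w)) as [R|R]; [exists w; auto|].
    destruct (not_reduced_split w R) as [a [b [l1 [l2 [E1 E2]]]]]. subst w.
    apply Forall_app in Hw. destruct Hw as [Ha Hb]. inversion Hb; subst. inversion H2; subst.
    destruct (IH (a ++ b)) as [w' [K1 [K2 K3]]].
    { rewrite length_app in *. simpl in Hl. lia. }
    { apply Forall_app; auto. }
    exists w'. split; auto. split; auto. intro t. rewrite K3, !W_app. simpl.
    apply cancel_linv in E2. subst l2. rewrite L_inv2; auto.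
Qed.

Lemma choose_letter (a1 a2 a3 : J * bool) : exists l, LOK l /\ l <> a1 /\ l <> a2 /\ l <> a3.
Proof.
  apply NNPP. intro H.
  assert (F : forall l, LOK l -> l = a1 \/ l = a2 \/ l = a3).
  { intros l Hl. apply NNPP. intro C. apply H. exists l. split; auto. split; [|split]; intro; apply C; auto. }
  assert (D1 : LOK (i, true)) by (left; reflexivity).
  assert (D2 : LOK (i, false)) by (left; reflexivity).
  assert (D3 : LOK (j, true)) by (right; reflexivity).
  assert (D4 : LOK (j, false)) by (right; reflexivity).
  destruct (F _ D1) as [E1|[E1|E1]]; destruct (F _ D2) as [E2|[E2|E2]];
  destruct (F _ D3) as [E3|[E3|E3]]; destruct (F _ D4) as [E4|[E4|E4]]; congruence.
Qed.


Lemma Forall_app2 {A : Type} (P : A -> Prop) a b : Forall P a -> Forall P b -> Forall P (a ++ b).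
Proof. intros; apply Forall_app; auto. Qed.

Lemma step r s t (Dom : R -> Prop) c d :
  NR r s t -> Forall LOK r -> Good (W r) ->
  (forall k x, k = i \/ k = j -> Dom x -> Dom (fx k x) /\ Dom (fy k x)) ->
  (forall z, c <= z -> Dom z) ->
  (forall x, Dom x -> (x < c \/ d < x) -> W r x = x) ->
  (forall p, Fix p -> p <= d -> forall k, k = i \/ k = j -> p < fx k c /\ p < fy k c) ->
  exists r' s', NR r' s' (linv s) /\ Forall LOK r' /\ Good (W r') /\ (forall x, Dom x -> W r' x = x).
Proof.
  intros NRr Hr Gr HD Hc Hid HF.
  set (xl := Rmin (Rmin (fx i c) (fy i c)) (Rmin (fx j c) (fy j c))).
  set (yl := Rmax (Rmax (fx i d) (fy i d)) (Rmax (fx j d) (fy j d))).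
  assert (Lx : forall l, LOK l -> xl <= L l c).
  { intros [k [|]]; unfold LOK, L; simpl; intros [-> | ->]; unfold xl.
    - eapply Rle_trans; [apply Rmin_l|apply Rmin_l].
    - eapply Rle_trans; [apply Rmin_r|apply Rmin_l].
    - eapply Rle_trans; [apply Rmin_l|apply Rmin_r].
    - eapply Rle_trans; [apply Rmin_r|apply Rmin_r]. }
  assert (Ly : forall l, LOK l -> L l d <= yl).
  { intros [k [|]]; unfold LOK, L; simpl; intros [-> | ->]; unfold yl.
    - eapply Rle_trans; [apply Rmax_l|apply Rmax_l].
    - eapply Rle_trans; [apply Rmax_l|apply Rmax_r].
    - eapply Rle_trans; [apply Rmax_r|apply Rmax_l].
    - eapply Rle_trans; [apply Rmax_r|apply Rmax_r]. }
  assert (HFF : forall p, xl <= p -> p <= yl -> ~ Fix p).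
  { intros p H1 H2 Fp. destruct (Rle_or_lt p d) as [Hpd|Hpd].
    - destruct (HF p Fp Hpd i (or_introl eq_refl)) as [A1 A2].
      destruct (HF p Fp Hpd j (or_intror eq_refl)) as [A3 A4].
      assert (p < xl) by (unfold xl; repeat apply Rmin_glb_lt; auto). lra.
    - assert (Hl : forall l, LOK l -> L l d < p).
      { intros l Hl. rewrite <- (L_fix l p Hl Fp) at 1. apply L_inc; auto. }
      assert (yl < p).
      { unfold yl. repeat apply Rmax_lub_lt.
        - apply (Hl (i, true)); left; reflexivity.
        - apply (Hl (i, false)); left; reflexivity.
        - apply (Hl (j, true)); right; reflexivity.
        - apply (Hl (j, false)); right; reflexivity. }
      lra. }
  destruct (push xl yl HFF) as [h0 [Hh0 Hph]].
  destruct (reduce_word (length h0) h0 (le_n _) Hh0) as [h [Hh [Rh Eh]]].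
  assert (Hph' : W h yl < xl) by (rewrite Eh; auto).
  destruct (choose_letter s (linv t) (match hd_error h with Some h1 => linv h1 | None => s end))
    as [u [Hu [Hu1 [Hu2 Hu3]]]].
  destruct (choose_letter (linv s) t (match lastl h with Some hk => linv hk | None => linv u end))
    as [v [Hv [Hv1 [Hv2 Hv3]]]].
  set (q := u :: h ++ [v]).
  assert (Hq : Forall LOK q) by (unfold q; constructor; auto; apply Forall_app2; auto).
  assert (NRq : NR q u v).
  { split; [|split; [reflexivity|]].
    - change q with ([u] ++ (h ++ [v])). apply reduced_app.
      + exact Logic.I.
      + apply reduced_app; auto. { exact Logic.I. }
        intros x y Hx Hy. simpl in Hy. inversion Hy; subst. rewrite Hx in Hv3. apply nocancel. auto.
      + intros x y Hx Hy. simpl in Hx. inversion Hx; subst.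
        destruct h as [|h1 h']; simpl in Hy, Hu3, Hv3; inversion Hy; subst.
        * apply nocancel. auto.
        * apply nocancel. apply linv_neq. auto.
    - unfold q. change (u :: h ++ [v]) with ((u :: h) ++ [v]). apply lastl_app. reflexivity. }
  assert (Hr' : Forall LOK (winv r)) by (apply Forall_winv; auto).
  assert (Hq' : Forall LOK (winv q)) by (apply Forall_winv; auto).
  pose proof (NR_inv q u v NRq) as NRqi. pose proof (NR_inv r s t NRr) as NRri.
  set (A := q ++ (r ++ winv q)). set (B := q ++ (winv r ++ winv q)).
  set (r' := A ++ (r ++ (B ++ winv r))).
  assert (NRA : NR A u (linv u)).
  { apply NR_app with v s; auto.
    - apply NR_app with t (linv v); auto.
      apply nocancel; intro E0. apply linv_inj in E0. auto.
    - apply nocancel. apply linv_neq. auto. }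
  assert (NRB : NR B u (linv u)).
  { apply NR_app with v (linv t); auto.
    - apply NR_app with (linv s) (linv v); auto.
      apply nocancel; intro E0. rewrite linv_linv in E0. apply Hv1. rewrite <- E0, linv_linv. reflexivity.
    - apply nocancel; intro E0. apply linv_inj in E0. auto. }
  assert (NRr' : NR r' u (linv s)).
  { apply NR_app with (linv u) s; auto.
    - apply NR_app with t u; auto.
      + apply NR_app with (linv u) (linv t); auto.
        apply nocancel; intro E0. rewrite linv_linv in E0. auto.
      + apply nocancel; intro E0. auto.
    - apply nocancel; intro E0. rewrite linv_linv in E0. auto. }
  assert (HA' : Forall LOK A) by (unfold A; apply Forall_app2; [auto|apply Forall_app2; auto]).
  assert (HB' : Forall LOK B) by (unfold B; apply Forall_app2; [auto|apply Forall_app2; auto]).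
  assert (EA : forall x, W A x = W q (W r (W (winv q) x))) by (intro; unfold A; rewrite !W_app; auto).
  assert (EB : forall x, W B x = W q (W (winv r) (W (winv q) x))) by (intro; unfold B; rewrite !W_app; auto).
  assert (Er : forall x, W r' x = W A (W r (W B (W (winv r) x)))) by (intro; unfold r'; rewrite !W_app; auto).
  exists r', u. split; [exact NRr'|split; [|split]].
  - unfold r'. apply Forall_app2; [auto|apply Forall_app2; [auto|apply Forall_app2; auto]].
  - eapply Good_ext; [intro; symmetry; apply Er|].
    apply Good_comp; [|apply Good_comp; [auto|apply Good_comp; [|apply Good_inv; auto]]].
    + eapply Good_ext; [intro; symmetry; apply EA|]. apply Good_conj; auto.
    + eapply Good_ext; [intro; symmetry; apply EB|]. apply Good_conj; auto. apply Good_inv; auto.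
  - intros x Hx. rewrite Er.
    apply (comm_id Dom (W A) (W B) (W r) (W (winv r)) (fun z => z < c) (fun z => c <= z <= d)); auto.
    + intro y. rewrite EA, EB, (proj1 (W_inv q _ Hq)), (proj1 (W_inv r _ Hr)), (proj2 (W_inv q _ Hq)). auto.
    + intro y. rewrite EA, EB, (proj1 (W_inv q _ Hq)), (proj2 (W_inv r _ Hr)), (proj2 (W_inv q _ Hq)). auto.
    + intro y. apply W_inv; auto.
    + intro y. apply W_inv; auto.
    + intros y Hy. repeat split; apply W_dom; auto.
    + intros y Hy Hny. set (z := W (winv q) y).
      assert (Dz : Dom z) by (apply W_dom; auto).
      destruct (classic (c <= z <= d)) as [Hz|Hz].
      * exfalso. apply Hny.
        assert (E1 : W q z = y) by (apply W_inv; auto).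
        rewrite <- E1. unfold q. simpl. rewrite W_app. simpl.
        assert (B1 : L v z <= yl) by (eapply Rle_trans; [apply L_le; auto; apply Hz|apply Ly; auto]).
        assert (B2 : W h (L v z) < L (linv u) c).
        { eapply Rle_lt_trans; [apply W_le; eauto|]. eapply Rlt_le_trans; [exact Hph'|]. apply Lx. apply LOK_linv; auto. }
        rewrite <- (L_inv2 u c Hu). apply L_inc; auto.
      * rewrite EA. fold z. rewrite Hid; auto. { apply W_inv; auto. }
        lra.
    + intros y Hy Hny. apply Hid; auto. lra.
    + simpl. intros y H1 H2. lra.
Qed.


Definition cntf (d : R) := fun e => if Rlt_dec e d then true else false.
Definition cnt (d : R) := length (filter (cntf d) E).

Lemma cnt_le_gen l d1 d2 : d1 <= d2 ->
  (length (filter (cntf d1) l) <= length (filter (cntf d2) l))%nat.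
Proof.
  intros H. induction l as [|y l IHl]; simpl; [lia|]. unfold cntf.
  destruct (Rlt_dec y d1) as [A1|A1]; destruct (Rlt_dec y d2) as [A2|A2]; simpl; fold (cntf d1); fold (cntf d2); try lia.
  exfalso. apply A2. lra.
Qed.

Lemma cnt_lt_gen l a d1 d2 : d1 <= a -> a < d2 -> In a l ->
  (length (filter (cntf d1) l) < length (filter (cntf d2) l))%nat.
Proof.
  intros H1 H2. induction l as [|x l IH]; intro Hin; [destruct Hin|].
  pose proof (cnt_le_gen l d1 d2 ltac:(lra)) as Hle.
  simpl. unfold cntf. destruct Hin as [Ex|Hin]; [subst x|].
  - destruct (Rlt_dec a d1) as [A1|A1]; [lra|]. destruct (Rlt_dec a d2) as [A2|A2]; [|lra].
    simpl. fold (cntf d1); fold (cntf d2). lia.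
  - specialize (IH Hin). destruct (Rlt_dec x d1) as [A1|A1]; destruct (Rlt_dec x d2) as [A2|A2]; simpl;
    fold (cntf d1); fold (cntf d2); try lia. exfalso. apply A2. lra.
Qed.

Lemma core r s t d0 : NR r s t -> Forall LOK r -> Good (W r) -> (forall x, d0 < x -> W r x = x) ->
  exists r' s' a, NR r' s' (linv s) /\ Forall LOK r' /\ Good (W r') /\
    (forall x, a < x -> W r' x = x) /\ (cnt a < cnt d0)%nat.
Proof.
  intros NRr Hr Gr Hd0.
  destruct (Hfree r (NR_nonnil _ _ _ NRr) (proj1 NRr) Hr) as [x0 Hx0].
  destruct (completeness (fun x => W r x <> x)) as [d [Hd1 Hd2]].
  { exists d0. intros x Hx. apply Rnot_lt_le. intro. apply Hx, Hd0; auto. }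
  { exists x0; auto. }
  assert (Pd : forall x, d < x -> W r x = x).
  { intros x Hx. apply NNPP. intro H. assert (x <= d) by (apply Hd1; auto). lra. }
  assert (dd0 : d <= d0).
  { apply Hd2. intros x Hx. apply Rnot_lt_le. intro. apply Hx, Hd0; auto. }
  assert (NFd : ~ Fix d).
  { intro Fd. destruct (proj1 Gr d Fd) as [e [He Hid]].
    assert (d <= d - e / 2).
    { apply Hd2. intros x Hx. apply Rnot_lt_le. intro. apply Hx. apply Hid.
      assert (x <= d) by (apply Hd1; auto). apply Rabs_def1; lra. }
    lra. }
  destruct (classic (exists p, Fix p /\ p <= d)) as [[p0 Hp0]|NoF].
  - destruct (completeness (fun p => Fix p /\ p <= d)) as [a [Ha1 Ha2]].
    { exists d. intros p [_ H]; auto. } { exists p0; auto. }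
    assert (Fk : forall k, k = i \/ k = j -> fx k a = a /\ fy k a = a).
    { intros k Hk.
      assert (A1 : a <= fx k a).
      { apply Ha2. intros p [Fp Hp]. assert (p <= a) by (apply Ha1; split; auto).
        rewrite <- (L_fix (k, true) p) by (auto; unfold LOK; auto). apply (L_le (k, true)); auto. }
      assert (A2 : a <= fy k a).
      { apply Ha2. intros p [Fp Hp]. assert (p <= a) by (apply Ha1; split; auto).
        rewrite <- (L_fix (k, false) p) by (auto; unfold LOK; auto). apply (L_le (k, false)); auto. }
      assert (A3 : fx k a <= a).
      { rewrite <- (Hxy k a Hk) at 2. apply (L_le (k, true)); auto. }
      assert (fx k a = a) by lra. split; auto.
      rewrite <- H at 1. apply Hyx; auto. }
    assert (Fa : Fix a) by (split; apply Fk; auto).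
    assert (ad : a <= d) by (apply Ha2; intros p [_ H]; auto).
    assert (ad' : a < d) by (destruct ad; auto; subst; contradiction).
    assert (HFa : forall p, Fix p -> p <= d -> p <= a) by (intros; apply Ha1; split; auto).
    assert (InE : In a E).
    { destruct (Hgfix i 1 a (or_introl eq_refl) (or_introl eq_refl) (proj1 (Fk i (or_introl eq_refl))))
        as [l1 [m1 [_ [G1 C1]]]].
      destruct (Hgfix j 1 a (or_intror eq_refl) (or_introl eq_refl) (proj1 (Fk j (or_intror eq_refl))))
        as [l2 [m2 [_ [G2 C2]]]].
      destruct (C1 eq_refl) as [[-> ->]|?]; [|auto]. destruct (C2 eq_refl) as [[-> ->]|?]; [|auto].
      exfalso. destruct G1 as [T1 G1], G2 as [T2 G2].
      assert (P0 : 0 < / (d - a)) by (apply Rinv_0_lt_compat; lra).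
      set (T := Rmax (Rmax T1 T2) (/ (d - a)) + 1).
      pose proof (Rmax_l (Rmax T1 T2) (/ (d - a))). pose proof (Rmax_r (Rmax T1 T2) (/ (d - a))).
      pose proof (Rmax_l T1 T2). pose proof (Rmax_r T1 T2).
      assert (TP : 0 < T) by (unfold T; lra).
      assert (Fx : Fix (a + / T)).
      { split.
        - rewrite G1 by (unfold T in *; lra). f_equal. f_equal. ring.
        - rewrite G2 by (unfold T in *; lra). f_equal. f_equal. ring. }
      assert (X1 : / T < d - a).
      { replace (d - a) with (/ / (d - a)) by (field; lra). apply Rinv_lt_contravar.
        - apply Rmult_lt_0_compat; auto.
        - unfold T; lra. }
      assert (X2 : 0 < / T) by (apply Rinv_0_lt_compat; auto).
      assert (a + / T <= a) by (apply HFa; auto; lra). lra. }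
    destruct (proj1 Gr a Fa) as [e [He Hida]].
    destruct (step r s t (fun x => a < x) (a + e / 2) d NRr Hr Gr) as [r' [s' [N1 [N2 [N3 N4]]]]].
    + intros k x Hk Hx. destruct (Fk k Hk) as [F1 F2]. split.
      * rewrite <- F1. apply Hinc; auto.
      * rewrite <- F2. apply fy_inc; auto.
    + intros z Hz. lra.
    + intros x Hx [Hx'|Hx'].
      * apply Hida. apply Rabs_def1; lra.
      * apply Pd; auto.
    + intros p Fp Hp k Hk. assert (p <= a) by auto. destruct (Fk k Hk) as [F1 F2].
      assert (a < fx k (a + e / 2)) by (rewrite <- F1 at 1; apply Hinc; auto; lra).
      assert (a < fy k (a + e / 2)) by (rewrite <- F2 at 1; apply fy_inc; auto; lra).
      lra.
    + exists r', s', a. split; auto. split; auto. split; auto. split; auto.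
      apply cnt_lt_gen with a; auto; lra.
  - destruct (proj2 Gr) as [M HM].
    destruct (step r s t (fun _ => True) (- Rabs M - 1) d NRr Hr Gr) as [r' [s' [N1 [N2 [N3 N4]]]]].
    + auto.
    + auto.
    + intros x _ [Hx|Hx].
      * apply HM. pose proof (Rle_abs (- x)). rewrite Rabs_Ropp in H. pose proof (Rle_abs M). lra.
      * apply Pd; auto.
    + intros p Fp Hp. exfalso; apply NoF; eauto.
    + exfalso. destruct (Hfree r' (NR_nonnil _ _ _ N1) (proj1 N1) N2) as [t0 Ht0]. apply Ht0, N4; auto.
Qed.

Lemma main_ind n : forall r s t d0, NR r s t -> Forall LOK r -> Good (W r) ->
  (forall x, d0 < x -> W r x = x) -> (cnt d0 <= n)%nat -> False.
Proof.
  induction n as [|n IH]; intros r s t d0 H1 H2 H3 H4 H5;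
  destruct (core r s t d0 H1 H2 H3 H4) as [r' [s' [a [N1 [N2 [N3 [N4 N5]]]]]]].
  - lia.
  - apply (IH r' s' (linv s) a); auto. lia.
Qed.

Lemma Germ_comp4 a b c d kap s la ma lb mb lc mc ld md : (s = 1 \/ s = -1) ->
  0 < lb -> 0 < lc -> 0 < ld ->
  Germ a kap s la ma -> Germ b kap s lb mb -> Germ c kap s lc mc -> Germ d kap s ld md ->
  Germ (fun x => a (b (c (d x)))) kap s (la * (lb * (lc * ld))) (la * (lb * (lc * md + mc) + mb) + ma).
Proof.
  intros Hs P1 P2 P3 G1 G2 G3 G4.
  apply (Germ_comp a (fun x => b (c (d x)))); auto.
  { repeat apply Rmult_lt_0_compat; auto. }
  apply (Germ_comp b (fun x => c (d x))); auto.
  { repeat apply Rmult_lt_0_compat; auto. }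
  apply Germ_comp; auto.
Qed.

Definition r0 : list (J * bool) :=
  [(i,true);(j,true);(i,false);(j,false);(i,false);(j,false);(i,true);(j,true);
   (j,true);(i,true);(j,false);(i,false);(j,false);(i,false);(j,true);(i,true)].

Lemma r0_NR : NR r0 (i, true) (i, true).
Proof.
  split; [|split; reflexivity]. unfold r0. simpl.
  repeat split; intros [E1 N1]; simpl in *; try (apply N1; reflexivity); try (apply hij; auto).
Qed.

Lemma r0_LOK : Forall LOK r0.
Proof. unfold r0. repeat apply Forall_cons; try apply Forall_nil; unfold LOK; simpl; auto. Qed.

Lemma Germ_eq1 phi kap s l m : Germ phi kap s l m -> l = 1 -> Germ phi kap s 1 m.
Proof. intros G ->. exact G. Qed.

Lemma Germ_r0 kap s : (s = 1 \/ s = -1) ->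
  (forall k, k = i \/ k = j -> exists l m, 0 < l /\ Germ (fx k) kap s l m) -> Germ (W r0) kap s 1 0.
Proof.
  intros Hs HG.
  destruct (HG i (or_introl eq_refl)) as [l1 [m1 [P1 G1]]].
  destruct (HG j (or_intror eq_refl)) as [l2 [m2 [P2 G2]]].
  assert (G1' := Germ_inv (fx i) (fy i) kap s l1 m1 Hs P1 (fun x => Hyx i x (or_introl eq_refl)) G1).
  assert (G2' := Germ_inv (fx j) (fy j) kap s l2 m2 Hs P2 (fun x => Hyx j x (or_intror eq_refl)) G2).
  assert (Q1 : 0 < / l1) by (apply Rinv_0_lt_compat; auto).
  assert (Q2 : 0 < / l2) by (apply Rinv_0_lt_compat; auto).
  pose proof (Germ_comp4 _ _ _ _ _ _ _ _ _ _ _ _ _ _ Hs P2 Q1 Q2 G1 G2 G1' G2') as C1.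
  pose proof (Germ_comp4 _ _ _ _ _ _ _ _ _ _ _ _ _ _ Hs Q2 P1 P2 G1' G2' G1 G2) as C2.
  pose proof (Germ_comp4 _ _ _ _ _ _ _ _ _ _ _ _ _ _ Hs P1 Q2 Q1 G2 G1 G2' G1') as C3.
  pose proof (Germ_comp4 _ _ _ _ _ _ _ _ _ _ _ _ _ _ Hs Q1 P2 P1 G2' G1' G2 G1) as C4.
  apply Germ_eq1 in C1; [|field; lra].
  apply Germ_eq1 in C2; [|field; lra].
  apply Germ_eq1 in C3; [|field; lra].
  apply Germ_eq1 in C4; [|field; lra].
  pose proof (Germ_comp4 _ _ _ _ _ _ _ _ _ _ _ _ _ _ Hs Rlt_0_1 Rlt_0_1 Rlt_0_1 C1 C2 C3 C4) as C.
  eapply Germ_ext; [|eapply Germ_eq; [| |exact C]].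
  - intro x. reflexivity.
  - ring.
  - field; lra.
Qed.

Lemma Good_r0 : Good (W r0).
Proof.
  split.
  - intros p Fp. apply Germ_id_fix.
    + apply W_fix; auto. apply r0_LOK.
    + apply Germ_r0; [left; reflexivity|]. intros k Hk.
      destruct (Hgfix k 1 p Hk (or_introl eq_refl)) as [l [m [P [G _]]]].
      { destruct Hk as [-> | ->]; apply Fp. }
      exists l, m; auto.
    + apply Germ_r0; [right; reflexivity|]. intros k Hk.
      destruct (Hgfix k (-1) p Hk (or_intror eq_refl)) as [l [m [P [G _]]]].
      { destruct Hk as [-> | ->]; apply Fp. }
      exists l, m; auto.
  - apply Germ_id_inf; apply Germ_r0; auto.
Qed.

Lemma partB_false : False.
Proof.
  destruct (proj2 Good_r0) as [M HM].
  apply (main_ind (cnt (Rabs M)) r0 (i, true) (i, true) (Rabs M) r0_NR r0_LOK Good_r0); auto.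
  intros x Hx. apply HM. pose proof (Rle_abs x). pose proof (Rle_abs M). lra.
Qed.

End PartB.

Definition WinFam (Wf : R -> R -> Prop) :=
  (forall d d' x, 0 < d' <= d -> Wf d' x -> Wf d x) /\
  (forall d, 0 < d -> exists x, Wf d x) /\
  (forall e, exists d, 0 < d /\ ((forall x, Wf d x -> x < e) \/ (forall x, Wf d x -> e < x))).

Lemma side_const (o : P1) (Wx : R -> Prop) :
  (forall e, o = Some e -> (forall x, Wx x -> x < e) \/ (forall x, Wx x -> e < x)) ->
  forall x x', Wx x -> Wx x' ->
  (ltP1 o (Some x) <-> ltP1 o (Some x')) /\ (ltP1 (Some x) o <-> ltP1 (Some x') o) /\
  Some x <> o /\ Some x' <> o.
Proof.
  destruct o as [e|]; intros H x x' Hx Hx'; simpl.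
  - destruct (H e eq_refl) as [A|A]; pose proof (A x Hx); pose proof (A x' Hx');
    repeat split; intros; try lra; intro Heq; inversion Heq; lra.
  - repeat split; intros; auto; discriminate.
Qed.

Lemma arc_const pc (Wx : R -> Prop) :
  (forall e, (pa pc = Some e \/ pb pc = Some e) -> (forall x, Wx x -> x < e) \/ (forall x, Wx x -> e < x)) ->
  forall x x', Wx x -> Wx x' -> (in_arc pc (Some x) <-> in_arc pc (Some x')).
Proof.
  intros H x x' Hx Hx'.
  destruct (side_const (pa pc) Wx (fun e E => H e (or_introl E)) x x' Hx Hx') as [A1 [A2 [A3 A4]]].
  destruct (side_const (pb pc) Wx (fun e E => H e (or_intror E)) x x' Hx Hx') as [B1 [B2 [B3 B4]]].
  destruct pc as [a b ca cb m]; unfold in_arc, open_arc, cyc in *; simpl in *. tauto.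
Qed.

Lemma window_cover (ps : list piece) (Hcov : forall x, exists p, In p ps /\ in_arc p x) Wf :
  WinFam Wf -> exists pc d, In pc ps /\ 0 < d /\ forall x, Wf d x -> in_arc pc (Some x).
Proof.
  intros [Hmono [Hne Hend]].
  assert (Each : forall pc, exists d, 0 < d /\ ((forall x, Wf d x -> in_arc pc (Some x)) \/
                                             (forall x, Wf d x -> ~ in_arc pc (Some x)))).
  { intro pc.
    assert (Hend' : forall o : P1, exists d, 0 < d /\ forall e, o = Some e ->
               (forall x, Wf d x -> x < e) \/ (forall x, Wf d x -> e < x)).
    { intros [e|].
      - destruct (Hend e) as [d [Hd H]]. exists d. split; auto. intros e' E; inversion E; subst; auto.
      - exists 1. split; [lra|]. intros; discriminate. }
    destruct (Hend' (pa pc)) as [d1 [Hd1 H1]], (Hend' (pb pc)) as [d2 [Hd2 H2]].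
    set (d := Rmin d1 d2). assert (Hd : 0 < d) by (apply Rmin_glb_lt; auto).
    assert (Hw : forall e, (pa pc = Some e \/ pb pc = Some e) ->
               (forall x, Wf d x -> x < e) \/ (forall x, Wf d x -> e < x)).
    { intros e [E|E].
      - destruct (H1 e E) as [A|A]; [left|right]; intros x Hx; apply A; apply (Hmono d1 d x); auto;
        split; auto; apply Rmin_l.
      - destruct (H2 e E) as [A|A]; [left|right]; intros x Hx; apply A; apply (Hmono d2 d x); auto;
        split; auto; apply Rmin_r. }
    destruct (Hne d Hd) as [x0 Hx0].
    exists d. split; auto. destruct (classic (in_arc pc (Some x0))) as [I0|I0]; [left|right]; intros x Hx.
    - apply (arc_const pc (Wf d) Hw x0 x Hx0 Hx); auto.
    - intro. apply I0. apply (arc_const pc (Wf d) Hw x0 x Hx0 Hx); auto. }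
  assert (Gen : forall l, (exists pc d, In pc l /\ 0 < d /\ forall x, Wf d x -> in_arc pc (Some x)) \/
     (exists d, 0 < d /\ forall pc, In pc l -> forall x, Wf d x -> ~ in_arc pc (Some x))).
  { induction l as [|pc l IH].
    - right. exists 1. split; [lra|]. intros pc [].
    - destruct (Each pc) as [d [Hd [A|A]]].
      + left. exists pc, d. simpl; auto.
      + destruct IH as [[pc' [d' [I1 [I2 I3]]]]|[d' [Hd' B]]].
        * left. exists pc', d'. simpl. auto.
        * right. exists (Rmin d d'). split; [apply Rmin_glb_lt; auto|]. intros pc0 [E|I0] x Hx.
          -- subst. apply A. apply (Hmono d (Rmin d d') x); auto. split; [apply Rmin_glb_lt; auto|apply Rmin_l].
          -- apply (B pc0 I0). apply (Hmono d' (Rmin d d') x); auto. split; [apply Rmin_glb_lt; auto|apply Rmin_r]. }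
  destruct (Gen ps) as [H|[d [Hd B]]]; auto.
  exfalso. destruct (Hne d Hd) as [x Hx]. destruct (Hcov (Some x)) as [pc [I1 I2]]. apply (B pc I1 x Hx I2).
Qed.

Lemma WF_right p : WinFam (fun d x => p < x < p + d).
Proof. split; [|split].
  - intros d d' x H1 H2. lra.
  - intros d Hd. exists (p + d / 2). lra.
  - intro e. destruct (Rle_or_lt e p).
    + exists 1. split; [lra|]. right. intros; lra.
    + exists (e - p). split; [lra|]. left. intros; lra.
Qed.

Lemma WF_left p : WinFam (fun d x => p - d < x < p).
Proof. split; [|split].
  - intros d d' x H1 H2. lra.
  - intros d Hd. exists (p - d / 2). lra.
  - intro e. destruct (Rle_or_lt p e).
    + exists 1. split; [lra|]. left. intros; lra.
    + exists (p - e). split; [lra|]. right. intros; lra.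
Qed.

Lemma WF_pinf : WinFam (fun d x => / d < x).
Proof. split; [|split].
  - intros d d' x H1 H2. assert (/ d <= / d') by (apply Rinv_le_contravar; lra). lra.
  - intros d Hd. exists (/ d + 1). lra.
  - intro e. exists (/ (Rabs e + 1)). pose proof (Rabs_pos e). split; [apply Rinv_0_lt_compat; lra|].
    right. intros x Hx. rewrite Rinv_inv in Hx. pose proof (Rle_abs e). lra.
Qed.

Lemma WF_minf : WinFam (fun d x => x < - / d).
Proof. split; [|split].
  - intros d d' x H1 H2. assert (/ d <= / d') by (apply Rinv_le_contravar; lra). lra.
  - intros d Hd. exists (- / d - 1). lra.
  - intro e. exists (/ (Rabs e + 1)). pose proof (Rabs_pos e). split; [apply Rinv_0_lt_compat; lra|].
    left. intros x Hx. rewrite Rinv_inv in Hx. pose proof (Rle_abs (- e)). rewrite Rabs_Ropp in H0. lra.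
Qed.

Lemma beta0 (al be ga D : R) :
  (forall eta rho, 0 < eta -> 0 < rho -> exists u v, Rabs u < rho /\ Rabs v < eta /\ al * u + be = v * (ga * u + D)) ->
  be = 0.
Proof.
  intro H. apply NNPP. intro Hb. set (B := Rabs be). assert (HB : 0 < B) by (apply Rabs_pos_lt; auto).
  set (A := Rabs al). set (Gm := Rabs ga). set (DD := Rabs D).
  assert (A0 : 0 <= A) by apply Rabs_pos. assert (G0 : 0 <= Gm) by apply Rabs_pos.
  assert (D0 : 0 <= DD) by apply Rabs_pos.
  set (eta := B / (2 * (DD + Gm + 1))). set (rho2 := B / (2 * (A + 1))).
  assert (He : 0 < eta) by (unfold eta; apply Rdiv_lt_0_compat; lra).
  assert (Hr2 : 0 < rho2) by (unfold rho2; apply Rdiv_lt_0_compat; lra).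
  destruct (H eta (Rmin 1 rho2) He (Rmin_glb_lt _ _ _ Rlt_0_1 Hr2)) as [u [v [Hu [Hv E]]]].
  set (U := Rabs u). set (V := Rabs v). assert (U0 : 0 <= U) by apply Rabs_pos. assert (V0 : 0 <= V) by apply Rabs_pos.
  assert (Hu1 : U < 1) by (eapply Rlt_le_trans; [exact Hu|apply Rmin_l]).
  assert (Hu2 : U < rho2) by (eapply Rlt_le_trans; [exact Hu|apply Rmin_r]).
  assert (F1 : B <= Rabs (al * u + be) + A * U).
  { unfold B, A, U. rewrite <- Rabs_mult. replace be with ((al * u + be) + - (al * u)) at 1 by ring.
    eapply Rle_trans; [apply Rabs_triang|]. rewrite Rabs_Ropp. lra. }
  assert (F2 : Rabs (ga * u + D) <= Gm * U + DD).
  { unfold Gm, U, DD. rewrite <- Rabs_mult. apply Rabs_triang. }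
  assert (F3 : Rabs (v * (ga * u + D)) = V * Rabs (ga * u + D)) by (apply Rabs_mult).
  assert (F4 : U * (2 * (A + 1)) < B).
  { unfold rho2 in Hu2. apply Rmult_lt_compat_r with (r := 2 * (A + 1)) in Hu2; [|lra].
    replace (B / (2 * (A + 1)) * (2 * (A + 1))) with B in Hu2 by (field; lra). exact Hu2. }
  assert (F5 : V * (2 * (DD + Gm + 1)) < B).
  { unfold eta in Hv. apply Rmult_lt_compat_r with (r := 2 * (DD + Gm + 1)) in Hv; [|lra].
    replace (B / (2 * (DD + Gm + 1)) * (2 * (DD + Gm + 1))) with B in Hv by (field; lra). exact Hv. }
  assert (F6 : Gm * U <= Gm) by nra.
  assert (F7 : V * Rabs (ga * u + D) <= V * (Gm + DD)) by (apply Rmult_le_compat_l; lra).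
  rewrite E in F1. rewrite F3 in F1. nra.
Qed.

Lemma ivt_up (h : R -> R) (Hc : continuity h) a b y : a < b -> h a < y < h b ->
  exists z, a <= z <= b /\ h z = y.
Proof.
  intros Hab [H1 H2].
  assert (C : continuity (fun z => h z - y)).
  { apply (continuity_minus h (fct_cte y)); auto. apply continuity_const. intros ? ?. reflexivity. }
  destruct (IVT (fun z => h z - y) a b C Hab ltac:(lra) ltac:(lra)) as [z [Hz1 Hz2]].
  exists z. split; auto. lra.
Qed.

Lemma ivt_down (h : R -> R) (Hc : continuity h) a b y : a < b -> h b < y < h a ->
  exists z, a <= z <= b /\ h z = y.
Proof.
  intros Hab [H1 H2].
  assert (C : continuity (fun z => y - h z)).
  { apply (continuity_minus (fct_cte y) h); auto. apply continuity_const. intros ? ?. reflexivity. }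
  destruct (IVT (fun z => y - h z) a b C Hab ltac:(lra) ltac:(lra)) as [z [Hz1 Hz2]].
  exists z. split; auto. lra.
Qed.

Lemma between (h : R -> R) (Hc : continuity h) (Hi : forall a b, h a = h b -> a = b) a b c :
  a < b < c -> (h a < h b < h c) \/ (h c < h b < h a).
Proof.
  intros [Hab Hbc].
  assert (N1 : h a <> h b) by (intro E; apply Hi in E; lra).
  assert (N2 : h b <> h c) by (intro E; apply Hi in E; lra).
  assert (N3 : h a <> h c) by (intro E; apply Hi in E; lra).
  destruct (Rdichotomy _ _ N1) as [X1|X1]; destruct (Rdichotomy _ _ N2) as [X2|X2].
  - left; lra.
  - exfalso. destruct (Rdichotomy _ _ N3) as [X3|X3].
    + destruct (ivt_up h Hc a b (h c) Hab ltac:(lra)) as [z [Hz E]]. apply Hi in E. lra.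
    + destruct (ivt_down h Hc b c (h a) Hbc ltac:(lra)) as [z [Hz E]]. apply Hi in E. lra.
  - exfalso. destruct (Rdichotomy _ _ N3) as [X3|X3].
    + destruct (ivt_up h Hc b c (h a) Hbc ltac:(lra)) as [z [Hz E]]. apply Hi in E. lra.
    + destruct (ivt_down h Hc a b (h c) Hab ltac:(lra)) as [z [Hz E]]. apply Hi in E. lra.
  - right; lra.
Qed.

Lemma inc_from (h : R -> R) (Hc : continuity h) (Hi : forall a b, h a = h b -> a = b) u v :
  u < v -> h u < h v -> forall x y, x < y -> h x < h y.
Proof.
  intros Huv Hh x y Hxy.
  set (M := Rmax (Rmax x y) (Rmax u v) + 1).
  pose proof (Rmax_l (Rmax x y) (Rmax u v)). pose proof (Rmax_r (Rmax x y) (Rmax u v)).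
  pose proof (Rmax_l x y). pose proof (Rmax_r x y). pose proof (Rmax_l u v). pose proof (Rmax_r u v).
  assert (uM : h u < h M).
  { destruct (between h Hc Hi u v M ltac:(unfold M; lra)); lra. }
  assert (yM : h y < h M).
  { destruct (Rtotal_order u y) as [L|[Eq|G]].
    - destruct (between h Hc Hi u y M ltac:(unfold M; lra)); lra.
    - subst; auto.
    - destruct (between h Hc Hi y u M ltac:(unfold M; lra)); lra. }
  destruct (between h Hc Hi x y M ltac:(unfold M; lra)); lra.
Qed.

Section GermF.
Variables (F G : R -> R).
Hypothesis FG : forall t, F (G t) = t.
Hypothesis GF : forall t, G (F t) = t.
Hypothesis Finc : forall a b, a < b -> F a < F b.

Lemma Ginc a b : a < b -> G a < G b.
Proof. intro H. destruct (Rlt_or_le (G a) (G b)) as [|H2]; auto. exfalso.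
  destruct H2 as [H2|H2]; [apply Finc in H2|apply (f_equal F) in H2]; rewrite !FG in H2; lra. Qed.

Lemma Fle a b : a <= b -> F a <= F b.
Proof. intros [H|H]; [left; auto|right; subst; auto]. Qed.

Lemma germ_fix_common p a b c d (Hdet : a * d - b * c = 1) (Hb : a * p + b - p * (c * p + d) = 0)
  t (Ht : t <> 0) (Hn : c * (p + / t) + d <> 0) :
  (a * (p + / t) + b) / (c * (p + / t) + d) = p + / ((c * p + d) * (c * p + d) * t + c * (c * p + d)).
Proof.
  set (D := c * p + d).
  assert (HD : (a - p * c) * D = 1).
  { replace ((a - p * c) * D) with ((a * d - b * c) + c * (a * p + b - p * (c * p + d))) by (unfold D; ring).
    rewrite Hdet, Hb. ring. }
  assert (D0 : D <> 0) by (intro E; rewrite E in HD; lra).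
  assert (Dt : D * t + c <> 0).
  { intro E. apply Hn. replace (c * (p + / t) + d) with ((D * t + c) / t) by (unfold D; field; auto).
    rewrite E. unfold Rdiv. ring. }
  assert (Ea' : a - p * c = / D). { apply (Rmult_eq_reg_r D); auto. rewrite Rinv_l; auto. }
  assert (Ea : a = p * c + / D) by lra.
  assert (Eb : b = p * D - a * p) by (unfold D in *; lra).
  assert (E2 : D * D * t + c * D = D * (D * t + c)) by ring.
  fold D. rewrite E2, Eb, Ea.
  replace (c * (p + / t) + d) with ((D * t + c) / t) by (unfold D; field; auto).
  field. repeat split; auto.
Qed.

Lemma germ_right p (Fp : F p = p) a b c d del (Hd : 0 < del) (Hdet : a * d - b * c = 1)
  (Hloc : forall x, p < x < p + del -> c * x + d <> 0 /\ F x = (a * x + b) / (c * x + d)) :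
  a * p + b - p * (c * p + d) = 0 /\
  Germ F (fun t => p + / t) 1 ((c * p + d) * (c * p + d)) (c * (c * p + d)).
Proof.
  assert (Gp : G p = p) by (rewrite <- Fp at 1; apply GF).
  assert (Hb : a * p + b - p * (c * p + d) = 0).
  { apply (beta0 (a - p * c) _ c (c * p + d)). intros eta rho He Hr.
    set (z := G (p + eta / 2)).
    assert (Hz : p < z) by (unfold z; rewrite <- Gp at 1; apply Ginc; lra).
    pose proof (Rmin_l del rho). pose proof (Rmin_r del rho).
    set (m := Rmin del rho) in *. assert (Hm : 0 < m) by (apply Rmin_glb_lt; auto).
    pose proof (Rmin_l z (p + m / 2)). pose proof (Rmin_r z (p + m / 2)).
    set (x := Rmin z (p + m / 2)) in *.
    assert (Hx : p < x) by (apply Rmin_glb_lt; lra).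
    assert (F1 : F x <= p + eta / 2) by (rewrite <- (FG (p + eta / 2)); apply Fle; fold z; lra).
    assert (F2 : p < F x) by (rewrite <- Fp at 1; apply Finc; auto).
    destruct (Hloc x) as [Hn Hfx]; [lra|].
    exists (x - p), (F x - p). split; [|split].
    - rewrite Rabs_pos_eq by lra. lra.
    - rewrite Rabs_pos_eq by lra. lra.
    - rewrite Hfx. field. auto. }
  split; auto.
  exists (/ del). intros t Ht. rewrite Rmult_1_l in Ht.
  assert (T0 : 0 < / del) by (apply Rinv_0_lt_compat; auto).
  assert (t0 : 0 < t) by lra.
  assert (X1 : / t < del).
  { replace del with (/ / del) by (field; lra). apply Rinv_lt_contravar; auto. apply Rmult_lt_0_compat; auto. }
  assert (X2 : 0 < / t) by (apply Rinv_0_lt_compat; auto).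
  destruct (Hloc (p + / t)) as [Hn Hfx]; [lra|].
  rewrite Hfx. apply germ_fix_common; auto. lra.
Qed.

Lemma germ_left p (Fp : F p = p) a b c d del (Hd : 0 < del) (Hdet : a * d - b * c = 1)
  (Hloc : forall x, p - del < x < p -> c * x + d <> 0 /\ F x = (a * x + b) / (c * x + d)) :
  a * p + b - p * (c * p + d) = 0 /\
  Germ F (fun t => p + / t) (-1) ((c * p + d) * (c * p + d)) (c * (c * p + d)).
Proof.
  assert (Gp : G p = p) by (rewrite <- Fp at 1; apply GF).
  assert (Hb : a * p + b - p * (c * p + d) = 0).
  { apply (beta0 (a - p * c) _ c (c * p + d)). intros eta rho He Hr.
    set (z := G (p - eta / 2)).
    assert (Hz : z < p) by (unfold z; apply Rlt_le_trans with (G p); [apply Ginc; lra|rewrite Gp; lra]).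
    pose proof (Rmin_l del rho). pose proof (Rmin_r del rho).
    set (m := Rmin del rho) in *. assert (Hm : 0 < m) by (apply Rmin_glb_lt; auto).
    pose proof (Rmax_l z (p - m / 2)). pose proof (Rmax_r z (p - m / 2)).
    set (x := Rmax z (p - m / 2)) in *.
    assert (Hx : x < p) by (apply Rmax_lub_lt; lra).
    assert (F1 : p - eta / 2 <= F x) by (rewrite <- (FG (p - eta / 2)); apply Fle; fold z; lra).
    assert (F2 : F x < p) by (apply Rlt_le_trans with (F p); [apply Finc; auto|rewrite Fp; lra]).
    destruct (Hloc x) as [Hn Hfx]; [lra|].
    exists (x - p), (F x - p). split; [|split].
    - rewrite Rabs_left by lra. lra.
    - rewrite Rabs_left by lra. lra.
    - rewrite Hfx. field. auto. }
  split; auto.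
  exists (/ del). intros t Ht.
  assert (T0 : 0 < / del) by (apply Rinv_0_lt_compat; auto).
  assert (t0 : t < 0) by lra.
  assert (X1 : / (- t) < del).
  { replace del with (/ / del) by (field; lra). apply Rinv_lt_contravar; [apply Rmult_lt_0_compat; lra|lra]. }
  assert (X2 : 0 < / (- t)) by (apply Rinv_0_lt_compat; lra).
  rewrite Rinv_opp in X1, X2.
  destruct (Hloc (p + / t)) as [Hn Hfx]; [lra|].
  rewrite Hfx. apply germ_fix_common; auto. lra.
Qed.

End GermF.

Section GermInf.
Variables (F G : R -> R).
Hypothesis FG : forall t, F (G t) = t.
Hypothesis GF : forall t, G (F t) = t.
Hypothesis Finc : forall a b, a < b -> F a < F b.

Lemma mob_bound a b c d x : a * d - b * c = 1 -> c <> 0 -> c * x + d <> 0 ->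
  1 + Rabs c <= Rabs (c * x + d) -> Rabs ((a * x + b) / (c * x + d)) < Rabs (a / c) + Rabs (/ c) + 1.
Proof.
  intros Hdet Hc Hn Hge.
  assert (Eb : b = (a * d - 1) / c).
  { apply (Rmult_eq_reg_r c); auto. field_simplify; auto. lra. }
  assert (E : (a * x + b) / (c * x + d) = a / c + (- / c) * / (c * x + d)).
  { rewrite Eb. field. auto. }
  rewrite E. eapply Rle_lt_trans; [apply Rabs_triang|].
  rewrite Rabs_mult, Rabs_Ropp, (Rabs_inv (c * x + d)).
  assert (P1 : 0 < Rabs (c * x + d)) by (apply Rabs_pos_lt; auto).
  assert (P2 : / Rabs (c * x + d) <= 1).
  { replace 1 with (/ 1) by field. apply Rinv_le_contravar; [lra|]. pose proof (Rabs_pos c). lra. }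
  assert (P3 : 0 <= Rabs (/ c)) by apply Rabs_pos.
  assert (Rabs (/ c) * / Rabs (c * x + d) <= Rabs (/ c)) by (rewrite <- (Rmult_1_r (Rabs (/ c))) at 2; apply Rmult_le_compat_l; auto).
  lra.
Qed.

Lemma c_zero_common a b c d (Hdet : a * d - b * c = 1) (Wx : R -> Prop)
  (Hloc : forall x, Wx x -> c * x + d <> 0 /\ F x = (a * x + b) / (c * x + d))
  (Hbig : forall K M, exists x, Wx x /\ M <= Rabs x /\ K <= Rabs (F x)) : c = 0.
Proof.
  apply NNPP. intro Hc. assert (Pc : 0 < Rabs c) by (apply Rabs_pos_lt; auto).
  set (K := Rabs (a / c) + Rabs (/ c) + 1).
  destruct (Hbig K ((1 + Rabs d) / Rabs c + 1)) as [x [Hx [HM HK]]].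
  destruct (Hloc x Hx) as [Hn Hfx].
  assert (Hge : 1 + Rabs c <= Rabs (c * x + d)).
  { assert (A : Rabs c * ((1 + Rabs d) / Rabs c + 1) <= Rabs c * Rabs x) by (apply Rmult_le_compat_l; lra).
    replace (Rabs c * ((1 + Rabs d) / Rabs c + 1)) with (1 + Rabs d + Rabs c) in A by (field; lra).
    rewrite <- Rabs_mult in A.
    pose proof (Rabs_triang (c * x + d) (- d)). rewrite Rabs_Ropp in H.
    replace (c * x + d + - d) with (c * x) in H by ring. lra. }
  pose proof (mob_bound a b c d x Hdet Hc Hn Hge). rewrite <- Hfx in H. fold K in H. lra.
Qed.

Lemma germ_pinf a b c d del (Hd : 0 < del) (Hdet : a * d - b * c = 1)
  (Hloc : forall x, / del < x -> c * x + d <> 0 /\ F x = (a * x + b) / (c * x + d)) :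
  0 < a * a /\ Germ F (fun t => t) 1 (a * a) (a * b).
Proof.
  assert (Hc : c = 0).
  { apply (c_zero_common a b c d Hdet (fun x => / del < x) Hloc).
    intros K M.
    pose proof (Rmax_l (Rmax (G (Rabs K)) (/ del + 1)) (Rabs M)).
    pose proof (Rmax_r (Rmax (G (Rabs K)) (/ del + 1)) (Rabs M)).
    pose proof (Rmax_l (G (Rabs K)) (/ del + 1)). pose proof (Rmax_r (G (Rabs K)) (/ del + 1)).
    set (x := Rmax (Rmax (G (Rabs K)) (/ del + 1)) (Rabs M)) in *.
    assert (I0 : 0 < / del) by (apply Rinv_0_lt_compat; auto).
    exists x. split; [lra|split].
    - pose proof (Rle_abs M). rewrite (Rabs_pos_eq x) by lra. lra.
    - assert (F (G (Rabs K)) <= F x) by (apply (Fle F); auto; lra). rewrite FG in H3.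
      pose proof (Rle_abs K). pose proof (Rle_abs (F x)). lra. }
  subst c. assert (Ha : a * d = 1) by lra.
  assert (a <> 0) by (intro E; rewrite E in Ha; lra).
  split; [apply Rsqr_pos_lt; auto|].
  exists (/ del). intros t Ht. rewrite Rmult_1_l in Ht. destruct (Hloc t Ht) as [Hn Hfx].
  rewrite Hfx. replace d with (/ a) by (apply (Rmult_eq_reg_l a); auto; rewrite Rinv_r; auto; lra).
  field. auto.
Qed.

Lemma germ_minf a b c d del (Hd : 0 < del) (Hdet : a * d - b * c = 1)
  (Hloc : forall x, x < - / del -> c * x + d <> 0 /\ F x = (a * x + b) / (c * x + d)) :
  0 < a * a /\ Germ F (fun t => t) (-1) (a * a) (a * b).
Proof.
  assert (Hc : c = 0).
  { apply (c_zero_common a b c d Hdet (fun x => x < - / del) Hloc).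
    intros K M.
    pose proof (Rmin_l (Rmin (G (- Rabs K)) (- / del - 1)) (- Rabs M)).
    pose proof (Rmin_r (Rmin (G (- Rabs K)) (- / del - 1)) (- Rabs M)).
    pose proof (Rmin_l (G (- Rabs K)) (- / del - 1)). pose proof (Rmin_r (G (- Rabs K)) (- / del - 1)).
    set (x := Rmin (Rmin (G (- Rabs K)) (- / del - 1)) (- Rabs M)) in *.
    assert (I0 : 0 < / del) by (apply Rinv_0_lt_compat; auto).
    exists x. split; [lra|split].
    - pose proof (Rle_abs M). rewrite (Rabs_left x) by lra. lra.
    - assert (F x <= F (G (- Rabs K))) by (apply (Fle F); auto; lra). rewrite FG in H3.
      pose proof (Rle_abs K). pose proof (Rle_abs (- F x)). rewrite Rabs_Ropp in H5. lra. }
  subst c. assert (Ha : a * d = 1) by lra.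
  assert (a <> 0) by (intro E; rewrite E in Ha; lra).
  split; [apply Rsqr_pos_lt; auto|].
  exists (/ del). intros t Ht. assert (Ht' : t < - / del) by lra. destruct (Hloc t Ht') as [Hn Hfx].
  rewrite Hfx. replace d with (/ a) by (apply (Rmult_eq_reg_l a); auto; rewrite Rinv_r; auto; lra).
  field. auto.
Qed.

End GermInf.

Definition roots (m : R * R * R * R) : list R :=
  let '(a, b, c, d) := m in
  if Req_EM_T c 0 then (if Req_EM_T (d - a) 0 then nil else [b / (d - a)])
  else [(- (d - a) + sqrt ((d - a) * (d - a) + 4 * b * c)) / (2 * c);
        (- (d - a) - sqrt ((d - a) * (d - a) + 4 * b * c)) / (2 * c)].

Lemma roots_spec a b c d p : c * p * p + (d - a) * p - b = 0 -> ~ (c = 0 /\ d - a = 0) ->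
  In p (roots (a, b, c, d)).
Proof.
  intros H N. unfold roots. destruct (Req_EM_T c 0) as [Hc|Hc].
  - destruct (Req_EM_T (d - a) 0) as [Hd|Hd]; [tauto|]. left. subst c. field_simplify_eq; auto. lra.
  - set (s := 2 * c * p + (d - a)).
    assert (Hs : (d - a) * (d - a) + 4 * b * c = s * s) by (unfold s; nra).
    rewrite Hs. destruct (Rle_or_lt 0 s).
    + left. rewrite sqrt_square by auto. unfold s. field. auto.
    + right; left. replace (s * s) with ((- s) * (- s)) by ring. rewrite sqrt_square by lra. unfold s. field. auto.
Qed.

Lemma germ_Econd a b c d p : a * d - b * c = 1 -> a * p + b - p * (c * p + d) = 0 ->
  ((c * p + d) * (c * p + d) = 1 /\ c * (c * p + d) = 0) \/ In p (roots (a, b, c, d)).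
Proof.
  intros Hdet Hb. destruct (classic (c = 0 /\ d - a = 0)) as [[H1 H2]|N].
  - left. subst c. assert (a = d) by lra. subst a. split; [lra|ring].
  - right. apply roots_spec; auto. lra.
Qed.

Definition rv (o : P1) : R := match o with Some z => z | None => 0 end.

Section PA.
Variables (f g : P1 -> P1) (ps : list piece).
Hypothesis Hhom : homeo_P1 f.
Hypothesis Hinf : f None = None.
Hypothesis Hps : forall p, In p ps -> in_SL2 allR (pm p) /\ allP1 (pa p) /\ allP1 (pb p) /\
   forall x, in_arc p x -> f x = mob (pm p) x.
Hypothesis Hcov : forall x, exists p, In p ps /\ in_arc p x.
Hypothesis Hgf : forall p, g (f p) = p.
Hypothesis Hfg : forall p, f (g p) = p.

Definition fr t := rv (f (Some t)).
Definition gr t := rv (g (Some t)).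

Lemma fSome t : f (Some t) = Some (fr t).
Proof. unfold fr. destruct (f (Some t)) eqn:E; auto. exfalso.
  pose proof (Hgf (Some t)). rewrite E in H. pose proof (Hgf None). rewrite Hinf in H0. congruence. Qed.

Lemma gNone : g None = None.
Proof. destruct (g None) eqn:E; auto. pose proof (Hfg None). rewrite E, fSome in H. discriminate. Qed.

Lemma gSome t : g (Some t) = Some (gr t).
Proof. unfold gr. destruct (g (Some t)) eqn:E; auto. exfalso.
  pose proof (Hfg (Some t)). rewrite E, Hinf in H. discriminate. Qed.

Lemma fr_gr t : fr (gr t) = t.
Proof. pose proof (Hfg (Some t)). rewrite gSome, fSome in H. congruence. Qed.

Lemma gr_fr t : gr (fr t) = t.
Proof. pose proof (Hgf (Some t)). rewrite fSome, gSome in H. congruence. Qed.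

Lemma fr_inj a b : fr a = fr b -> a = b.
Proof. intro H. rewrite <- (gr_fr a), <- (gr_fr b), H. reflexivity. Qed.

Lemma fr_cont : continuity fr.
Proof.
  destruct Hhom as [g0 [_ [_ [Hc _]]]].
  intro x. unfold continuity_pt, continue_in, limit1_in, limit_in. intros eps Heps.
  set (V := fun q : P1 => match q with Some z => Rabs (z - fr x) < eps | None => False end).
  assert (HV : nbhd (f (Some x)) V).
  { rewrite fSome. simpl. exists eps. split; auto. }
  destruct (Hc (Some x) V HV) as [e [He He2]].
  exists e. split; auto. intros y [_ Hy]. simpl in Hy. unfold R_dist in Hy.
  specialize (He2 y Hy). rewrite fSome in He2. simpl. unfold R_dist. exact He2.
Qed.

Lemma mobloc Wf : WinFam Wf -> exists pc del a b c d, In pc ps /\ pm pc = (a, b, c, d) /\ 0 < del /\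
  a * d - b * c = 1 /\ forall x, Wf del x -> c * x + d <> 0 /\ fr x = (a * x + b) / (c * x + d).
Proof.
  intro HW. destruct (window_cover ps Hcov Wf HW) as [pc [del [Hin [Hd Harc]]]].
  destruct (Hps pc Hin) as [HS [_ [_ Hm]]].
  destruct (pm pc) as [[[a b] c] d] eqn:Em. simpl in HS.
  exists pc, del, a, b, c, d. split; auto. split; auto. split; auto. split; [tauto|].
  intros x Hx. specialize (Hm (Some x) (Harc x Hx)). rewrite fSome in Hm. simpl in Hm.
  destruct (Req_EM_T (c * x + d) 0) as [E|E]; [discriminate|]. inversion Hm. auto.
Qed.

Lemma local_inc : exists u v, u < v /\ fr u < fr v.
Proof.
  destruct (mobloc _ (WF_right 0)) as [pc [del [a [b [c [d [_ [_ [Hd [Hdet Hloc]]]]]]]]]].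
  set (u := del / 3). set (v := 2 * del / 3).
  destruct (Hloc u) as [Hu Hfu]; [unfold u; lra|]. destruct (Hloc v) as [Hv Hfv]; [unfold v; lra|].
  exists u, v. split; [unfold u, v; lra|].
  set (P := c * u + d) in *. set (Q := c * v + d) in *.
  assert (HPQ : 0 < P * Q).
  { destruct (Rlt_or_le 0 (P * Q)) as [|H]; auto. exfalso.
    assert (N : P * Q < 0).
    { destruct H as [H|H]; auto. apply Rmult_integral in H. tauto. }
    assert (PQ : P - Q <> 0) by (intro E; assert (P = Q) by lra; subst; nra).
    set (r := P / (P - Q)).
    assert (Hr : r * (P - Q) = P) by (unfold r; field; auto).
    assert (R0 : 0 < r < 1).
    { destruct (Rlt_or_le 0 P) as [HP|HP].
      - assert (HQ : Q < 0) by nra. assert (D1 : 0 < P - Q) by lra.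
        split.
        + destruct (Rlt_or_le 0 r) as [|Hr0]; auto. exfalso.
          assert (r * (P - Q) <= 0) by nra. lra.
        + destruct (Rlt_or_le r 1) as [|Hr0]; auto. exfalso.
          assert (1 * (P - Q) <= r * (P - Q)) by nra. lra.
      - assert (HP' : P < 0) by (destruct HP as [HP|HP]; auto; subst; nra).
        assert (HQ : 0 < Q) by nra. assert (D1 : P - Q < 0) by lra.
        split.
        + destruct (Rlt_or_le 0 r) as [|Hr0]; auto. exfalso.
          assert (0 <= r * (P - Q)) by nra. lra.
        + destruct (Rlt_or_le r 1) as [|Hr0]; auto. exfalso.
          assert (r * (P - Q) <= 1 * (P - Q)) by nra. lra. }
    set (z := u + (v - u) * r).
    destruct (Hloc z) as [Hz _]; [unfold z, u, v in *; nra|].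
    apply Hz. unfold z. replace (c * (u + (v - u) * r) + d) with (P + (Q - P) * r) by (unfold P, Q; ring).
    nra. }
  rewrite Hfu, Hfv.
  assert (E : (a * v + b) / Q - (a * u + b) / P = (v - u) * (a * d - b * c) / (P * Q)).
  { unfold P, Q in *. field. split; auto. }
  rewrite Hdet, Rmult_1_r in E.
  assert (0 < (v - u) / (P * Q)) by (apply Rdiv_lt_0_compat; auto; unfold u, v; lra).
  lra.
Qed.

Lemma fr_inc : forall a b, a < b -> fr a < fr b.
Proof.
  destruct local_inc as [u [v [H1 H2]]]. apply (inc_from fr fr_cont fr_inj u v H1 H2).
Qed.

Definition Ef := flat_map (fun pc => roots (pm pc)) ps.

Lemma PA_inf s : s = 1 \/ s = -1 -> exists lam mu, 0 < lam /\ Germ fr (fun t => t) s lam mu.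
Proof.
  intros [-> | ->].
  - destruct (mobloc _ WF_pinf) as [pc [del [a [b [c [d [_ [_ [Hd [Hdet Hloc]]]]]]]]]].
    destruct (germ_pinf fr gr fr_gr fr_inc a b c d del Hd Hdet Hloc) as [H1 H2].
    exists (a * a), (a * b). auto.
  - destruct (mobloc _ WF_minf) as [pc [del [a [b [c [d [_ [_ [Hd [Hdet Hloc]]]]]]]]]].
    destruct (germ_minf fr gr fr_gr fr_inc a b c d del Hd Hdet Hloc) as [H1 H2].
    exists (a * a), (a * b). auto.
Qed.

Lemma PA_fix s p : s = 1 \/ s = -1 -> fr p = p ->
  exists lam mu, 0 < lam /\ Germ fr (fun t => p + / t) s lam mu /\
    (s = 1 -> (lam = 1 /\ mu = 0) \/ In p Ef).
Proof.
  intros [-> | ->] Fp.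
  - destruct (mobloc _ (WF_right p)) as [pc [del [a [b [c [d [Hin [Em [Hd [Hdet Hloc]]]]]]]]]].
    destruct (germ_right fr gr fr_gr gr_fr fr_inc p Fp a b c d del Hd Hdet Hloc) as [Hb G].
    exists ((c * p + d) * (c * p + d)), (c * (c * p + d)). split; [|split; auto].
    + assert (c * p + d <> 0).
      { intro E. rewrite E in Hb. assert (a * p + b = 0) by lra.
        assert (a * d - b * c = (a * p + b) * (- c) + a * (c * p + d)) by ring. rewrite E in H0. nra. }
      apply Rsqr_pos_lt. auto.
    + intros _. destruct (germ_Econd a b c d p Hdet Hb) as [[E1 E2]|E]; [left; auto|right].
      unfold Ef. apply in_flat_map. exists pc. rewrite Em. auto.
  - destruct (mobloc _ (WF_left p)) as [pc [del [a [b [c [d [Hin [Em [Hd [Hdet Hloc]]]]]]]]]].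
    destruct (germ_left fr gr fr_gr gr_fr fr_inc p Fp a b c d del Hd Hdet Hloc) as [Hb G].
    exists ((c * p + d) * (c * p + d)), (c * (c * p + d)). split; [|split; auto].
    + assert (c * p + d <> 0).
      { intro E. rewrite E in Hb. assert (a * p + b = 0) by lra.
        assert (a * d - b * c = (a * p + b) * (- c) + a * (c * p + d)) by ring. rewrite E in H0. nra. }
      apply Rsqr_pos_lt. auto.
    + intro E. lra.
Qed.

End PA.

Lemma eval_W (J : Type) (i j : J) (x y : J -> P1 -> P1)
  (N1 : forall k, k = i \/ k = j -> x k None = None)
  (N2 : forall k, k = i \/ k = j -> y k None = None)
  (S1 : forall k t, k = i \/ k = j -> x k (Some t) = Some (rv (x k (Some t))))
  (S2 : forall k t, k = i \/ k = j -> y k (Some t) = Some (rv (y k (Some t)))) :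
  forall w, Forall (LOK J i j) w ->
    eval_word x y w None = None /\
    forall t, eval_word x y w (Some t) =
      Some (W J (fun k t => rv (x k (Some t))) (fun k t => rv (y k (Some t))) w t).
Proof.
  induction w as [|[k b] w IH]; intro H; [split; reflexivity|].
  inversion H; subst. destruct (IH H3) as [A B]. unfold LOK in H2. simpl in H2.
  split.
  - simpl. rewrite A. destruct b; auto.
  - intro t. simpl. rewrite B. unfold L. simpl. destruct b; auto.
Qed.

Lemma noF : ~ has_nonabelian_free_subgroup in_H.
Proof.
  intros [J [x [y [HS [Hinv [[i [j hij]] Hfree]]]]]].
  destruct (HS i) as [[Hhi [psi [Hpsi Hcovi]]] Hinfi].
  destruct (HS j) as [[Hhj [psj [Hpsj Hcovj]]] Hinfj].
  assert (Hgf : forall k p, y k (x k p) = p) by (intros; apply Hinv).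
  assert (Hfg : forall k p, x k (y k p) = p) by (intros; apply Hinv).
  assert (N1 : forall k, k = i \/ k = j -> x k None = None) by (intros k [Hk | Hk]; subst k; assumption).
  assert (N2 : forall k, k = i \/ k = j -> y k None = None)
    by (intros k Hk; apply (gNone (x k) (y k)); auto).
  assert (S1 : forall k t, k = i \/ k = j -> x k (Some t) = Some (rv (x k (Some t))))
    by (intros k t Hk; apply (fSome (x k) (y k)); auto).
  assert (S2 : forall k t, k = i \/ k = j -> y k (Some t) = Some (rv (y k (Some t))))
    by (intros k t Hk; apply (gSome (x k) (y k)); auto).
  apply (partB_false J i j (fun k t => rv (x k (Some t))) (fun k t => rv (y k (Some t)))
           (Ef psi ++ Ef psj) hij).
  - intros k t Hk; apply (fr_gr (x k) (y k)); auto.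
  - intros k t Hk; apply (gr_fr (x k) (y k)); auto.
  - intros k a b [Hk | Hk]; subst k.
    + apply (fr_inc (x i) (y i) psi); auto.
    + apply (fr_inc (x j) (y j) psj); auto.
  - intros w Hw Hr Hl. destruct (Hfree w Hw Hr) as [p Hp].
    destruct (eval_W J i j x y N1 N2 S1 S2 w Hl) as [A B].
    destruct p as [t|].
    + exists t. intro E. apply Hp. rewrite B, E. reflexivity.
    + exfalso. apply Hp. exact A.
  - intros k s [Hk | Hk] Hs; subst k.
    + apply (PA_inf (x i) (y i) psi); auto.
    + apply (PA_inf (x j) (y j) psj); auto.
  - intros k s p [Hk | Hk] Hs Fp; subst k.
    + destruct (PA_fix (x i) (y i) psi Hhi Hinfi Hpsi Hcovi (Hgf i) (Hfg i) s p Hs Fp)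
        as [l [m [H1 [H2 H3]]]].
      exists l, m. split; auto. split; auto. intro E. destruct (H3 E); [left|right]; auto.
      apply in_or_app; auto.
    + destruct (PA_fix (x j) (y j) psj Hhj Hinfj Hpsj Hcovj (Hgf j) (Hfg j) s p Hs Fp)
        as [l [m [H1 [H2 H3]]]].
      exists l, m. split; auto. split; auto. intro E. destruct (H3 E); [left|right]; auto.
      apply in_or_app; auto.
Qed.

Lemma HA_sub A f : in_HA A f -> in_H f.
Proof.
  intros [[Hh [ps [H1 H2]]] Hinf]. split; auto. split; auto. exists ps. split; auto.
  intros p Hp. destruct (H1 p Hp) as [S [_ [_ M]]]. split; [|split; [exact Logic.I|split; [exact Logic.I|auto]]].
  destruct (pm p) as [[[a b] c] d]. simpl in *. unfold allR. tauto.
Qed.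

Lemma mono_free (S1 S2 : (P1 -> P1) -> Prop) : (forall f, S1 f -> S2 f) ->
  has_nonabelian_free_subgroup S1 -> has_nonabelian_free_subgroup S2.
Proof.
  intros H [J [x [y [A [B [C D]]]]]]. exists J, x, y. split; auto.
Qed.

Theorem theorem2 :
  ~ has_nonabelian_free_subgroup in_H /\
  (forall A : R -> Prop, subring A -> ~ has_nonabelian_free_subgroup (in_HA A)).
Proof.
  split; [apply noF|]. intros A _ H. apply noF. eapply mono_free; [|exact H]. apply HA_sub.
Qed.
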